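(* Let $N\ge 1$, $M\ge 1$, let $x_1,\dots,x_N\in\mathbb{R}^M$, $y_1,\dots,y_N\in\mathbb{R}$, and let $X_N\in\mathbb{R}^{N\times M}$ be the matrix with rows $x_n^\top$ and $Y_N=(y_1,\dots,y_N)^\top$. Assume $X_N^\top X_N$ is invertible, and let $\theta_N=(X_N^\top X_N)^{-1}X_N^\top Y_N$. Fix a test vector $x\in\mathbb{R}^M$ and $\sigma>0$. For each $y\in\mathbb{R}$ let $$\hat\theta(y)=\arg\min_{\theta\in\mathbb{R}^M}\Big[\sum_{n=1}^N (y_n-x_n^\top\theta)^2+(y-x^\top\theta)^2\Big]$$ (the genie). Put $P_N=\dfrac{(X_N^\top X_N)^{-1}}{1+x^\top (X_N^\top X_N)^{-1}x}$. Then: (i) $y-x^\top\hat\theta(y)=(1-x^\top P_N x)(y-x^\top\theta_N)$ for every $y$; (ii) the normalization factor $K=\int_{\mathbb{R}} p_{\hat\theta(y')}(y'\mid x)\,dy'$ equals $$K=\frac{1}{1-x^\top P_N x}=1+x^\top (X_N^\top X_N)^{-1}x,$$ so the min-max regret is $\Gamma=\log K=\log\big(1+x^\top(X_N^\top X_N)^{-1}x\big)$; (iii) the pNML distribution $q_{\mathrm{pNML}}(y\mid x)=p_{\hat\theta(y)}(y\mid x)/K$ is $$q_{\mathrm{pNML}}(y\mid x)=\frac{1-x^\top P_N x}{\sqrt{2\pi\sigma^2}}\exp\Big\{-\frac{(1-x^\top P_N x)^2}{2\sigma^2}(y-x^\top\theta_N)^2\Big\},$$ i.e. a Gaussian with mean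 $x^\top\theta_N$ and variance $\sigma^2K^2$.
   Context: The hypothesis class is the Gaussian linear model $p_\theta(y\mid x)=\frac{1}{\sqrt{2\pi\sigma^2}}\exp\{-\frac{1}{2\sigma^2}(y-x^\top\theta)^2\}$, $\theta\in\mathbb{R}^M$. The pNML (predictive normalized maximum likelihood) learner is $q_{\mathrm{pNML}}(y\mid x)=p_{\hat\theta(y)}(y\mid x)/\int p_{\hat\theta(y')}(y'\mid x)\,dy'$, where $\hat\theta(y)$ is the genie: the hypothesis maximizing the likelihood of the training set together with the test pair $(x,y)$. *)

(* Defs.v *)
From HB Require Import structures.
From mathcomp Require Import all_boot all_order all_algebra.
From mathcomp Require Import all_classical all_reals all_analysis.
Set Implicit Arguments. Unset Strict Implicit. Unset Printing Implicit Defensive.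
Import Order.TTheory GRing.Theory Num.Theory.
Local Open Scope ring_scope.

Definition dotv (R : realType) (M : nat) (u v : 'cV[R]_M) : R := (u^T *m v) 0 0.

Definition gauss_pdf (R : realType) (s mu y : R) : R :=
  (Num.sqrt (2 * pi * s ^+ 2))^-1 * expR (- (y - mu) ^+ 2 / (2 * s ^+ 2)).

Definition plin (R : realType) (M : nat) (sigma : R) (theta x : 'cV[R]_M) (y : R) : R :=
  gauss_pdf sigma (dotv x theta) y.

Definition genie_loss (R : realType) (N M : nat) (X : 'M[R]_(N, M)) (Y : 'cV[R]_N)
    (x : 'cV[R]_M) (y : R) (theta : 'cV[R]_M) : R :=
  \sum_(n < N) (Y n 0 - (X *m theta) n 0) ^+ 2 + (y - dotv x theta) ^+ 2.

Definition is_genie (R : realType) (N M : nat) (X : 'M[R]_(N, M)) (Y : 'cV[R]_N)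
    (x : 'cV[R]_M) (y : R) (theta : 'cV[R]_M) : Prop :=
  forall theta' : 'cV[R]_M, genie_loss X Y x y theta <= genie_loss X Y x y theta'.

Definition thetaN (R : realType) (N M : nat) (X : 'M[R]_(N, M)) (Y : 'cV[R]_N) : 'cV[R]_M :=
  invmx (X^T *m X) *m X^T *m Y.

Definition PN (R : realType) (N M : nat) (X : 'M[R]_(N, M)) (x : 'cV[R]_M) : 'M[R]_M :=
  (1 + dotv x (invmx (X^T *m X) *m x))^-1 *: invmx (X^T *m X).

Definition pnml_norm (R : realType) (M : nat) (sigma : R) (x : 'cV[R]_M)
    (genie : R -> 'cV[R]_M) : \bar R :=
  (\int[@lebesgue_measure R]_(y in [set: R]) (plin sigma (genie y) x y)%:E)%E.

Definition q_pnml (R : realType) (M : nat) (sigma : R) (x : 'cV[R]_M)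
    (genie : R -> 'cV[R]_M) (y : R) : R :=
  plin sigma (genie y) x y / fine (pnml_norm sigma x genie).

(* Main.v *)
Require Import Defs.
From HB Require Import structures.
From mathcomp Require Import all_boot all_order all_algebra.
From mathcomp Require Import all_classical all_reals all_analysis.
From mathcomp Require Import ring lra.
Import Order.TTheory GRing.Theory Num.Theory.
Local Open Scope ring_scope.

Section Dot.
Variable R : realType.

Lemma dotvE (M : nat) (u v : 'cV[R]_M) : dotv u v = \sum_i u i 0 * v i 0.
Proof. by rewrite /dotv !mxE; apply: eq_bigr => i _; rewrite mxE. Qed.

Lemma dotvC (M : nat) (u v : 'cV[R]_M) : dotv u v = dotv v u.
Proof. by rewrite !dotvE; apply: eq_bigr => i _; rewrite mulrC. Qed.

Lemma dotvDl (M : nat) (u w v : 'cV[R]_M) : dotv (u + w) v = dotv u v + dotv w v.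
Proof. by rewrite !dotvE -big_split; apply: eq_bigr => i _; rewrite mxE mulrDl. Qed.

Lemma dotvZl (M : nat) k (u v : 'cV[R]_M) : dotv (k *: u) v = k * dotv u v.
Proof. by rewrite !dotvE mulr_sumr; apply: eq_bigr => i _; rewrite mxE mulrA. Qed.

Lemma dotvDr (M : nat) (u w v : 'cV[R]_M) : dotv v (u + w) = dotv v u + dotv v w.
Proof. by rewrite !(@dotvC _ v) dotvDl. Qed.

Lemma dotvZr (M : nat) k (u v : 'cV[R]_M) : dotv v (k *: u) = k * dotv v u.
Proof. by rewrite !(@dotvC _ v) dotvZl. Qed.

Lemma dotv_mulmx (M K : nat) (u : 'cV[R]_M) (B : 'M[R]_(M, K)) v :
  dotv u (B *m v) = dotv (B^T *m u) v.
Proof. by rewrite /dotv mulmxA trmx_mul trmxK. Qed.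

Lemma dotv_ge0 (M : nat) (u : 'cV[R]_M) : 0 <= dotv u u.
Proof. by rewrite dotvE; apply: sumr_ge0 => i _; rewrite -expr2 sqr_ge0. Qed.

Lemma dotv_eq0 (M : nat) (u : 'cV[R]_M) : dotv u u = 0 -> u = 0.
Proof.
rewrite dotvE => /psumr_eq0P H; apply/matrixP => i j.
rewrite (ord1 j) mxE; apply/eqP; rewrite -sqrf_eq0 expr2.
by apply/eqP; apply: H => // k _; rewrite -expr2 sqr_ge0.
Qed.

Lemma loss_dot (N M : nat) (X : 'M[R]_(N, M)) Y x y th :
  genie_loss X Y x y th = dotv (Y - X *m th) (Y - X *m th) + (y - dotv x th) ^+ 2.
Proof. rewrite /genie_loss; congr (_ + _); rewrite dotvE; apply: eq_bigr => i _; by rewrite !mxE expr2. Qed.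

Lemma genie_eq (N M : nat) (X : 'M[R]_(N, M)) Y x y th :
  X^T *m X \in unitmx -> is_genie X Y x y th ->
  th = thetaN X Y + (y - dotv x th) *: (invmx (X^T *m X) *m x).
Proof.
move=> U Hg.
set e := Y - X *m th; set r := y - dotv x th.
set G := X^T *m e + r *: x.
have HG : G = 0.
  set S := dotv G G.
  set Q := dotv (X *m G) (X *m G) + dotv x G ^+ 2.
  have key : forall t, genie_loss X Y x y (th + t *: G) =
      genie_loss X Y x y th - 2 * t * S + t ^+ 2 * Q.
    move=> t; rewrite !loss_dot.
    have -> : Y - X *m (th + t *: G) = e + (- t) *: (X *m G).
      by rewrite mulmxDr -scalemxAr /e scaleNr opprD addrA.
    rewrite dotvDr dotvZr dotvDr dotvZr (@dotvDl _ e) dotvZl (@dotvDl _ e) dotvZl.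
    have SE : S = dotv e (X *m G) + r * dotv x G.
      by rewrite /S {1}/G dotvDl dotvZl -dotv_mulmx.
    rewrite SE /Q (@dotvC _ (X *m G) e) -/e -/r.
    rewrite /r; clear SE; clearbody S Q G e r; ring.
  have S0 : 0 <= S by apply: dotv_ge0.
  have Q0 : 0 <= Q by rewrite addr_ge0 ?dotv_ge0 ?sqr_ge0.
  set t := S / (Q + 1).
  have tQ : t * (Q + 1) = S by rewrite /t divfK // gt_eqF // ltr_wpDl.
  have := Hg (th + t *: G); rewrite key => H.
  have St : S = 0 by nra.
  exact: dotv_eq0.
have HA : X^T *m X *m th = X^T *m Y + r *: x.
  move: HG; rewrite /G /e mulmxBr mulmxA => /eqP.
  rewrite addrAC subr_eq0 => /eqP <-.
  by [].
by rewrite -[th](mulKmx U) HA mulmxDr -scalemxAr /thetaN mulmxA.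
Qed.

End Dot.
Theorem mainTheorem1 (R : realType) (N M : nat) (X : 'M[R]_(N, M)) (Y : 'cV[R]_N)
    (x : 'cV[R]_M) (sigma : R) (genie : R -> 'cV[R]_M) :
  (0 < N)%N -> (0 < M)%N ->
  X^T *m X \in unitmx ->
  0 < sigma ->
  (forall y : R, is_genie X Y x y (genie y)) ->
  let a := 1 - dotv x (PN X x *m x) in
  (* (i) *)
  (forall y : R, y - dotv x (genie y) = a * (y - dotv x (thetaN X Y))) /\
  (* (ii) *)
  (pnml_norm sigma x genie = (a^-1)%:E /\
   a^-1 = 1 + dotv x (invmx (X^T *m X) *m x) /\
   ln (fine (pnml_norm sigma x genie)) = ln (1 + dotv x (invmx (X^T *m X) *m x))) /\
  (* (iii) *)
  (forall y : R,
     q_pnml sigma x genie y =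
       a / Num.sqrt (2 * pi * sigma ^+ 2) *
       expR (- (a ^+ 2 / (2 * sigma ^+ 2)) * (y - dotv x (thetaN X Y)) ^+ 2) /\
     q_pnml sigma x genie y =
       gauss_pdf (sigma * a^-1) (dotv x (thetaN X Y)) y).
Proof.
move=> _ _ U s0 Hg a.
set A := X^T *m X.
set c := dotv x (invmx A *m x).
set m := dotv x (thetaN X Y).
have c0 : 0 <= c.
  rewrite /c -{1}(mulKVmx U x) dotvC /A -mulmxA dotv_mulmx trmxK.
  exact: dotv_ge0.
have c1p : 0 < 1 + c by lra.
have c1 : 1 + c != 0 by rewrite gt_eqF.
have aE : a = (1 + c)^-1.
  rewrite /a /PN -/A -scalemxAl dotvZr -/c.
  by field.
have a0 : 0 < a by rewrite aE invr_gt0.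
have Hi : forall y, y - dotv x (genie y) = a * (y - m).
  move=> y; have E := @genie_eq R _ _ X Y x y (genie y) U (Hg y).
  have H : dotv x (genie y) = m + (y - dotv x (genie y)) * c.
    by rewrite {1}E dotvDr dotvZr.
  move: H; move: (dotv x (genie y)) => d H.
  rewrite aE; apply: (mulfI c1); rewrite mulrA mulfV // mul1r.
  nra.
have s0' : sigma != 0 by rewrite gt_eqF.
have a0' : a != 0 by rewrite gt_eqF.
set L := Num.sqrt (2 * pi * sigma ^+ 2).
have Lp : 0 < L by rewrite sqrtr_gt0 !mulr_gt0 ?pi_gt0 ?exprn_gt0.
have L0 : L != 0 by rewrite gt_eqF.
set g := fun y => expR (- (a ^+ 2 / (2 * sigma ^+ 2)) * (y - m) ^+ 2).
have plinE : forall y, plin sigma (genie y) x y = L^-1 * g y.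
  move=> y; rewrite /plin /gauss_pdf -/L /g; congr (_ * expR _).
  by rewrite (Hi y); field; rewrite ?s0' ?a0'.
have sqrtE : Num.sqrt (2 * pi * (sigma * a^-1) ^+ 2) = L * a^-1.
  rewrite /L exprMn mulrA sqrtrM; last by rewrite mulr_ge0 ?sqr_ge0 // mulr_ge0 ?pi_ge0.
  by rewrite sqrtr_sqr ger0_norm // invr_ge0 ltW.
have gaussE : forall y, gauss_pdf (sigma * a^-1) m y = a * (L^-1 * g y).
  move=> y; rewrite /gauss_pdf sqrtE /g invfM invrK [_^-1 * a]mulrC -mulrA; congr (_ * (_ * expR _)).
  by field; rewrite s0' a0'.
have npdfE : forall y, normal_pdf m (sigma * a^-1) y = gauss_pdf (sigma * a^-1) m y.
  move=> y; rewrite /normal_pdf ifF; last by apply/negbTE; rewrite mulf_neq0 // invr_eq0.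
  rewrite /normal_peak /normal_fun /gauss_pdf.
  have e1 : (sigma * a^-1) ^+ 2 * pi *+ 2 = 2 * pi * (sigma * a^-1) ^+ 2.
    by rewrite -mulr_natr; ring.
  have e2 : (sigma * a^-1) ^+ 2 *+ 2 = 2 * (sigma * a^-1) ^+ 2.
    by rewrite -mulr_natr; ring.
  by rewrite e1 e2.
have plinE2 : forall y, plin sigma (genie y) x y = a^-1 * normal_pdf m (sigma * a^-1) y.
  by move=> y; rewrite npdfE gaussE plinE mulKf.
have KE : pnml_norm sigma x genie = (a^-1)%:E.
  rewrite /pnml_norm.
  under eq_integral do rewrite plinE2 EFinM.
  rewrite integralZl //; last exact: integrable_normal_pdf.
  by rewrite integral_normal_pdf mule1.
have aI : a^-1 = 1 + c by rewrite aE invrK.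
split => //; split.
  by rewrite KE /= aI.
move=> y; rewrite /q_pnml KE /= invrK plinE; split.
  by rewrite /g; field; rewrite ?s0' ?a0' ?L0.
by rewrite gaussE mulrC.
Qed.
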